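(* Let $\Phi_{\vec p}=\sum_{k,l}p_{kl}U_{kl}\otimes\overline{U}_{kl}$ be an arbitrary Weyl channel. In the reordered product basis $\{|j\oplus k,j\rangle:\ k,j\in\{0,\dots,N-1\}\}$ the superoperator $\Phi_{\vec p}$ is block diagonal, $\Phi_{\vec p}=\bigoplus_{k=0}^{N-1}\Phi^{(k)}_{\vec p}$, where each block $\Phi^{(k)}_{\vec p}=\sum_{k'}\big(\sum_lp_{k'l}\,\omega^{kl}\big)X^{k'}$ is an $N\times N$ circulant matrix. Consequently the spectrum of $\Phi_{\vec p}$ is contained in the regular $N$-gon with vertices $1,\omega,\dots,\omega^{N-1}$ (the convex hull of the $N$-th roots of unity). Moreover the block $\Phi^{(0)}_{\vec p}$ equals $T(\Phi_{\vec p})=\sum_kq_kX^k$ with $q_k=\sum_lp_{kl}$, so the spectrum of $\Phi_{\vec p}$ contains the spectrum of $T(\Phi_{\vec p})$.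
   Context: Let $N\ge2$, $\omega=e^{2\pi i/N}$, $X|j\rangle=|j\oplus1\rangle$ (addition mod $N$), $Z=\mathrm{diag}(1,\omega,\dots,\omega^{N-1})$, Weyl unitaries $U_{kl}=X^kZ^l$. Maps on $N\times N$ matrices are identified with superoperators acting on $|A\rangle\rangle=\sum A_{ij}|i\rangle|j\rangle$ ($\rho\mapsto K\rho K^\dagger$ corresponds to $K\otimes\overline K$). A Weyl channel is $\Phi_{\vec p}=\sum_{k,l}p_{kl}U_{kl}\otimes\overline{U}_{kl}$ with $(p_{kl})$ a probability vector; its hyper-decoherence is the $N\times N$ matrix $T(\Phi)_{ij}=\langle ii|\Phi|jj\rangle=\mathrm{Tr}[|i\rangle\langle i|\,\Phi(|j\rangle\langle j|)]$. *)

(* Defs.v *)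
From mathcomp Require Import all_boot all_algebra.
From mathcomp Require Import reals trigo.
From mathcomp Require Export complex mxtens.
Set Implicit Arguments. Unset Strict Implicit. Unset Printing Implicit Defensive.
Import GRing.Theory Num.Theory.
Local Open Scope ring_scope.
Local Open Scope complex_scope.

Section Weyl.
Variables (R : realType) (N : nat).
Local Notation C := R[i].

Definition omega : C := Complex (cos (2 * pi / N%:R)) (sin (2 * pi / N%:R)).

Definition addN (j k : 'I_N) : 'I_N :=
  Ordinal (ltn_pmod (j + k) (leq_ltn_trans (leq0n j) (ltn_ord j))).

(* matrix power for N x N matrices (N is not syntactically a successor) *)
Definition mxpowN (A : 'M[C]_N) (k : nat) : 'M[C]_N := iter k (mulmx A) 1%:M.

(* X |j> = |j (+) 1>, i.e. X_{a b} = [a = b (+) 1] *)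
Definition shiftX : 'M[C]_N := \matrix_(a < N, b < N) ((nat_of_ord a == ((nat_of_ord b + 1) %% N)%N)%:R).
Definition clockZ : 'M[C]_N := \matrix_(a < N, b < N) ((a == b)%:R * omega ^+ b).

Definition weylU (k l : 'I_N) : 'M[C]_N := mxpowN shiftX k *m mxpowN clockZ l.

(* superoperator of rho |-> K rho K^dagger : K (x) conj K, in the basis |i>|j>
   indexed by mxtens_index (i, j) *)
Definition superop (K : 'M[C]_N) : 'M[C]_(N * N) := K *t map_mx conjc K.

Definition prob_vector (p : 'I_N -> 'I_N -> R) : Prop :=
  (forall k l, 0 <= p k l) /\ \sum_(k < N) \sum_(l < N) p k l = 1.

Definition weyl_channel (p : 'I_N -> 'I_N -> R) : 'M[C]_(N * N) :=
  \sum_(k < N) \sum_(l < N) (p k l)%:C *: superop (weylU k l).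

Definition hyper_decoherence (Phi : 'M[C]_(N * N)) : 'M[C]_N :=
  \matrix_(i, j) Phi (mxtens_index (i, i)) (mxtens_index (j, j)).

Definition weyl_block (p : 'I_N -> 'I_N -> R) (k : 'I_N) : 'M[C]_N :=
  \sum_(k' < N) (\sum_(l < N) (p k' l)%:C * omega ^+ (k * l)) *: mxpowN shiftX k'.

Definition in_Ngon (z : C) : Prop :=
  exists w : 'I_N -> R, (forall k, 0 <= w k) /\ \sum_(k < N) w k = 1 /\
    z = \sum_(k < N) (w k)%:C * omega ^+ k.

End Weyl.

(* Main.v *)
Require Import Defs.
From mathcomp Require Import all_boot all_algebra.
From mathcomp Require Import reals trigo.
From mathcomp Require Import complex mxtens.
From mathcomp Require Import ring lra.
Set Implicit Arguments. Unset Strict Implicit. Unset Printing Implicit Defensive.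
Import GRing.Theory Num.Theory.
Import mathcomp.order.order.Order.TTheory.
Local Open Scope ring_scope.
Local Open Scope complex_scope.

Section Om.
Variables (R : realType) (N : nat).
Hypothesis hN : (0 < N)%N.
Local Notation C := R[i].
Local Notation w := (omega R N).
Let th : R := 2 * pi / N%:R.

Lemma omegaX k : w ^+ k = Complex (cos (th *+ k)) (sin (th *+ k)).
Proof.
elim: k => [|k IH]; first by rewrite expr0 mulr0n cos0 sin0.
rewrite exprS IH /omega -/th /GRing.mul /= mulrS cosD sinD.
congr Complex; ring.
Qed.

Lemma thN : th *+ N = pi *+ 2.
Proof.
have N0 : (N%:R : R) != 0 by rewrite pnatr_eq0 -lt0n.
by rewrite /th -[_ *+ N]mulr_natr divfK // mulr_natl.
Qed.

Lemma omegaN : w ^+ N = 1.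
Proof. by rewrite omegaX thN cos2pi sin2pi. Qed.

Lemma omega_ne1 k : (0 < k < N)%N -> w ^+ k != 1.
Proof.
move=> /andP[k0 kN]; rewrite omegaX; apply/negP => /eqP [hc hs].
have Npos : (0 : R) < N%:R by rewrite ltr0n.
have x0 : 0 < th *+ k.
  by rewrite pmulrn_lgt0 // /th divr_gt0 // mulr_gt0 // pi_gt0.
have x2 : th *+ k < pi *+ 2.
  rewrite -thN -[th *+ k]mulr_natr -[th *+ N]mulr_natr ltr_pM2l ?ltr_nat //.
  by rewrite /th divr_gt0 // mulr_gt0 // pi_gt0.
have [xlt|xgt|xeq] := ltgtP (th *+ k) pi.
- by move: (sin_gt0_pi (introT andP (conj x0 xlt))); rewrite hs ltxx.
- have h1 : 0 < th *+ k - pi < pi.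
    by apply/andP; split; [rewrite subr_gt0 | rewrite ltrBlDr -mulr2n].
  move: (sin_gt0_pi h1); rewrite -[X in sin X](addrNK pi) sinDpi in hs.
  by rewrite -oppr_lt0 hs ltxx.
- by move: hc; rewrite xeq cospi => /eqP; rewrite eq_sym -addr_eq0 (_ : 1 + 1 = 2%:R :> R) // pnatr_eq0.
Qed.

Lemma omega_prim : N.-primitive_root w.
Proof.
have [m pm mN] := prim_order_exists hN omegaN.
have m0 := prim_order_gt0 pm.
have mle := dvdn_leq hN mN.
case: (ltngtP m N) => [mlt|mgt|meq].
- by move: (@omega_ne1 m); rewrite m0 mlt (prim_expr_order pm) eqxx => /(_ isT).
- by rewrite ltnNge mle in mgt.
- by move: pm; rewrite meq.
Qed.

Lemma omega_mod k : w ^+ (k %% N) = w ^+ k.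
Proof. exact: prim_expr_mod omega_prim k. Qed.

Lemma omega_conj k : (w ^+ k)^* * w ^+ k = 1.
Proof.
rewrite omegaX /GRing.mul /=.
apply/eqP; rewrite eq_complex /=; apply/andP; split; apply/eqP.
  by rewrite mulNr opprK -!expr2 cos2Dsin2.
by rewrite mulNr mulrC addrN.
Qed.
End Om.

Section Idx.
Variables (N : nat).
Hypothesis hN : (0 < N)%N.

Definition subN (j j' : 'I_N) : 'I_N := Ordinal (ltn_pmod (j + N - j') hN).

Lemma addN_subN (j j' : 'I_N) : addN j' (subN j j') = j.
Proof.
apply/val_inj => /=; rewrite modnDmr subnKC; last first.
  by apply: leq_trans (ltnW (ltn_ord j')) (leq_addl _ _).
by rewrite modnDr modn_small.
Qed.

Lemma addNI (j : 'I_N) : injective (addN j).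
Proof.
move=> a b /(congr1 val) /= /eqP; rewrite eqn_modDl !modn_small // => /eqP ab.
exact: val_inj.
Qed.

Lemma eq_addN (j j' k : 'I_N) : (j == addN j' k) = (k == subN j j').
Proof.
apply/eqP/eqP => [e|->]; last by rewrite addN_subN.
by apply: (@addNI j'); rewrite addN_subN.
Qed.

Lemma addNA (a b c : 'I_N) : addN (addN a b) c = addN a (addN b c).
Proof. by apply/val_inj => /=; rewrite modnDml modnDmr addnA. Qed.

Lemma addNC (a b : 'I_N) : addN a b = addN b a.
Proof. by apply/val_inj => /=; rewrite addnC. Qed.

Lemma sum_pick (V : nzRingType) (a : 'I_N) (F : 'I_N -> V) :
  \sum_(c < N) ((a == c)%:R * F c) = F a.
Proof.
rewrite (bigD1 a) //= eqxx mul1r big1 ?addr0 // => c ca.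
by rewrite eq_sym (negbTE ca) mul0r.
Qed.

Lemma sum_pick' (V : nzRingType) (a : 'I_N) (F : 'I_N -> V) :
  \sum_(c < N) ((c == a)%:R * F c) = F a.
Proof. by under eq_bigr do rewrite eq_sym; exact: sum_pick. Qed.
End Idx.

Section Entries.
Variables (R : realType) (N : nat).
Hypothesis hN : (0 < N)%N.
Local Notation C := R[i].
Local Notation w := (omega R N).

Lemma shiftXk (k : nat) (a b : 'I_N) :
  mxpowN (shiftX R N) k a b = (nat_of_ord a == (b + k) %% N)%N%:R.
Proof.
elim: k a => [|k IH] a.
  by rewrite /= mxE addn0 modn_small.
rewrite /= mxE.
under eq_bigr do rewrite IH mxE mulrC.
have h : ((b + k) %% N < N)%N by rewrite ltn_pmod.
rewrite (sum_pick' (Ordinal h)) /= modnDml addnS.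
by rewrite addn0 addnS.
Qed.

Lemma clockZl (l : nat) (a b : 'I_N) :
  mxpowN (clockZ R N) l a b = (a == b)%:R * w ^+ (b * l).
Proof.
elim: l a => [|l IH] a.
  by rewrite /= mxE muln0 expr0 mulr1.
rewrite /= mxE.
under eq_bigr do rewrite IH mxE -mulrA.
rewrite sum_pick mulrCA; case: (a =P b) => [->|_]; last by rewrite !mul0r ?mulr0.
by rewrite mulnS exprD.
Qed.

Lemma weylUE (k l a b : 'I_N) :
  weylU R k l a b = (a == addN b k)%:R * w ^+ (b * l).
Proof.
rewrite /weylU mxE.
under eq_bigr do rewrite shiftXk clockZl mulrCA.
by rewrite sum_pick'.
Qed.

Lemma channelE (p : 'I_N -> 'I_N -> R) (a b c d : 'I_N) :
  weyl_channel p (mxtens_index (a, b)) (mxtens_index (c, d)) =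
  \sum_(k < N) \sum_(l < N) (p k l)%:C *
     ((a == addN c k)%:R * w ^+ (c * l) * ((b == addN d k)%:R * (w ^+ (d * l))^* )).
Proof.
rewrite /weyl_channel summxE; apply: eq_bigr => k _.
rewrite summxE; apply: eq_bigr => l _.
rewrite mxE /superop tensmxE weylUE mxE weylUE rmorphM /= rmorph_nat //.
Qed.
End Entries.

Lemma comm4 (V : comNzRingType) (x y z u : V) : x * (y * (u * z)) = u * (x * (y * z)).
Proof. ring. Qed.

Section Block.
Variables (R : realType) (N : nat).
Hypothesis hN : (0 < N)%N.
Local Notation C := R[i].
Local Notation w := (omega R N).

Lemma shiftXk' (k a b : 'I_N) :
  mxpowN (shiftX R N) k a b = (a == addN b k)%:R.
Proof. exact: shiftXk. Qed.

Lemma blockE (p : 'I_N -> 'I_N -> R) (K j j' : 'I_N) :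
  weyl_block p K j j' = \sum_(l < N) (p (subN hN j j') l)%:C * w ^+ (K * l).
Proof.
rewrite /weyl_block summxE.
under eq_bigr do rewrite mxE shiftXk' eq_addN mulrC.
by rewrite sum_pick'.
Qed.

Lemma channel_block (p : 'I_N -> 'I_N -> R) (K K' j j' : 'I_N) :
  weyl_channel p (mxtens_index (addN j K, j)) (mxtens_index (addN j' K', j'))
  = if K == K' then weyl_block p K j j' else 0.
Proof.
rewrite channelE.
under eq_bigr => k _ do under eq_bigr => l _ do rewrite (eq_addN hN j) comm4.
under eq_bigr do rewrite -mulr_sumr.
rewrite sum_pick' blockE.
have -> : (addN j K == addN (addN j' K') (subN hN j j')) = (K == K').
  by rewrite addNA (addNC K') -addNA addN_subN (inj_eq (@addNI _ j)).
case: eqP => [<-|_]; last by rewrite big1 // => l _; rewrite !mul0r mulr0.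
apply: eq_bigr => l _; rewrite mul1r; congr (_ * _).
have -> : w ^+ (addN j' K * l) = w ^+ (j' * l) * w ^+ (K * l).
  by rewrite /= exprM omega_mod // -exprM mulnDl exprD.
by rewrite mulrAC [_ * _^*]mulrC omega_conj // mul1r.
exact: hN.
Qed.
End Block.

Section Transfer.
Variables (R : realType) (N : nat).
Hypothesis hN : (0 < N)%N.
Local Notation C := R[i].
Local Notation w := (omega R N).
Variable (p : 'I_N -> 'I_N -> R).

Definition sigma (K j : 'I_N) : 'I_(N * N) := mxtens_index (addN j K, j).

Lemma sum_sigma (F : 'I_(N * N) -> C) :
  \sum_x F x = \sum_(K < N) \sum_(j < N) F (sigma K j).
Proof.
rewrite (reindex (@mxtens_index N N)); last first.
  by exists (@mxtens_unindex N N) => x _; [rewrite mxtens_indexK | rewrite mxtens_unindexK].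
transitivity (\sum_(a < N) \sum_(b < N) F (mxtens_index (a, b))).
  by rewrite pair_big; apply: eq_bigr => [[a b]].
rewrite exchange_big [RHS]exchange_big /=; apply: eq_bigr => b _.
by rewrite (reindex_inj (@addNI _ b)).
Qed.

Lemma sigma_eq (K2 j2 K j : 'I_N) :
  (sigma K2 j2 == sigma K j) = (j2 == j) && (K2 == K).
Proof.
apply/eqP/andP => [/(can_inj (@mxtens_indexK N N)) [e1 e2]|[/eqP -> /eqP ->]] //.
subst j2; split => //; apply/eqP; apply: (@addNI _ j); exact: val_inj.
Qed.

Lemma sigma_ind (P : 'I_(N * N) -> Prop) :
  (forall K j, P (sigma K j)) -> forall x, P x.
Proof.
move=> H x; rewrite -(mxtens_unindexK x); case: (mxtens_unindex x) => a b.
by rewrite -(addN_subN hN a b); apply: H.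
Qed.

Lemma eig_to_block (z : C) :
  eigenvalue (weyl_channel p) z -> exists K, eigenvalue (weyl_block p K) z.
Proof.
case/eigenvalueP => v vE vn0.
have [K [j0 nz]] : exists K j, v 0 (sigma K j) != 0.
  have [x nz] : exists x, v 0 x != 0.
    apply/existsP; apply: contraR vn0 => /existsPn H; apply/eqP/rowP => x.
    by rewrite mxE; apply/eqP; move: (H x); rewrite negbK.
  by elim/sigma_ind: x nz => K j nz; exists K, j.
exists K; apply/eigenvalueP; exists (\row_j v 0 (sigma K j)); last first.
  by apply/negP => /eqP /rowP /(_ j0); rewrite !mxE; apply/eqP.
apply/rowP => j'; rewrite !mxE.
move/rowP: vE => /(_ (sigma K j')); rewrite !mxE sum_sigma => <-.
rewrite [RHS](bigD1 K) //= [X in _ = _ + X]big1 ?addr0.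
  by apply: eq_bigr => j _; rewrite mxE /sigma channel_block // eqxx.
move=> K2 /negbTE nK; apply: big1 => j _.
by rewrite /sigma channel_block // nK mulr0.
Qed.

Lemma block_to_eig (K : 'I_N) (z : C) :
  eigenvalue (weyl_block p K) z -> eigenvalue (weyl_channel p) z.
Proof.
case/eigenvalueP => u uE un0.
pose v : 'rV[C]_(N * N) := \row_x \sum_(j < N) (x == sigma K j)%:R * u 0 j.
have vE K2 j2 : v 0 (sigma K2 j2) = (K2 == K)%:R * u 0 j2.
  rewrite mxE; under eq_bigr do rewrite sigma_eq.
  case: (K2 =P K) => _.
    by under eq_bigr do rewrite andbT; rewrite sum_pick mul1r.
  by rewrite mul0r big1 // => j _; rewrite andbF mul0r.
apply/eigenvalueP; exists v.
  apply/rowP; apply: sigma_ind => K2 j2.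
  rewrite [LHS]mxE [RHS]mxE vE sum_sigma.
  under eq_bigr => K3 _ do under eq_bigr => j _ do rewrite vE.
  rewrite (bigD1 K) //= [X in _ + X]big1 ?addr0; last first.
    by move=> K3 /negbTE nK; apply: big1 => j _; rewrite nK !mul0r.
  under eq_bigr do rewrite eqxx mul1r /sigma channel_block //.
  case: (K =P K2) => [<-|/eqP nK].
    by move/rowP: uE => /(_ j2); rewrite !mxE eqxx mul1r.
  rewrite big1; last by move=> j _; rewrite mulr0.
  by rewrite eq_sym (negbTE nK) mul0r mulr0.
have [j0 nz] : exists j, u 0 j != 0.
  apply/existsP; apply: contraR un0 => /existsPn H; apply/eqP/rowP => x.
  by rewrite mxE; apply/eqP; move: (H x); rewrite negbK.
apply/negP => /eqP /rowP /(_ (sigma K j0)); rewrite vE eqxx mul1r mxE => h.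
by move: nz; rewrite h eqxx.
Qed.
End Transfer.

Section DFT.
Variables (R : realType) (N : nat).
Hypothesis hN : (0 < N)%N.
Local Notation C := R[i].
Local Notation w := (omega R N).

Lemma geom_sum (e : nat) :
  \sum_(m < N) w ^+ (e * m) = if (N %| e)%N then N%:R else 0.
Proof.
under eq_bigr do rewrite exprM.
rewrite (prim_order_dvd (omega_prim R hN)); case: eqP => [->|/eqP ne].
  by under eq_bigr do rewrite expr1n; rewrite sumr_const card_ord.
have : (w ^+ e) ^+ N - 1 = 0 by rewrite -exprM mulnC exprM omegaN // expr1n subrr.
by rewrite subrX1 => /eqP; rewrite mulf_eq0 subr_eq0 (negbTE ne) => /eqP.
Qed.

Definition gvec (m : nat) : 'cV[C]_N := \col_b w ^+ (m * b).

Lemma eq_addN' (a b k : 'I_N) : (a == addN b k) = (b == subN hN a k).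
Proof. by rewrite addNC eq_addN. Qed.

Lemma shift_gvec (m : nat) (k : 'I_N) :
  mxpowN (shiftX R N) k *m gvec m = w ^+ (m * (N.-1 * k)) *: gvec m.
Proof.
apply/colP => a; rewrite !mxE.
under eq_bigr do rewrite (shiftXk' _ hN) eq_addN' mxE.
rewrite sum_pick' /= mulnC exprM omega_mod // -exprM.
have h : w ^+ (a + N - k) = w ^+ a * w ^+ (N.-1 * k).
  apply: (mulIf (x := w ^+ k)).
    by rewrite expf_neq0 //; apply/eqP => w0; move: (omegaN R hN); rewrite w0 expr0n gtn_eqF // => /eqP; rewrite eq_sym oner_eq0.
  rewrite -[LHS]exprD subnK; last by apply: leq_trans (ltnW (ltn_ord k)) (leq_addl _ _).
  rewrite exprD omegaN // mulr1 -mulrA -exprD.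
  by rewrite -{2}(mul1n k) -mulnDl addn1 prednK // exprM omegaN // expr1n mulr1.
by rewrite exprM h exprMn -!exprM mulrC; congr (_ * _); rewrite mulnC.
Qed.

Lemma dvd_iff (a b : 'I_N) : (N %| b + a * N.-1)%N = (b == a).
Proof.
have ya : w ^+ (a * N.-1) * w ^+ a = 1.
  by rewrite -exprD -{2}(muln1 a) -mulnDr addn1 prednK // mulnC exprM omegaN // expr1n.
rewrite (prim_order_dvd (omega_prim R hN)) exprD.
have -> : (w ^+ b * w ^+ (a * N.-1) == 1) = (w ^+ b == w ^+ a).
  apply/eqP/eqP => [e|->]; last by rewrite mulrC ya.
  by rewrite -[LHS]mulr1 -ya mulrA e mul1r.
by rewrite (eq_prim_root_expr (omega_prim R hN)) !modn_small.
Qed.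

Lemma circ_eig (c : 'I_N -> C) (z : C) :
  eigenvalue (\sum_(k < N) c k *: mxpowN (shiftX R N) k) z ->
  exists m : nat, z = \sum_(k < N) c k * w ^+ (m * (N.-1 * k)).
Proof.
set B := \sum_(k < N) _.
case/eigenvalueP => u uE un0.
pose lam m := \sum_(k < N) c k * w ^+ (m * (N.-1 * k)).
have Bg m : B *m gvec m = lam m *: gvec m.
  rewrite mulmx_suml scaler_suml; apply: eq_bigr => k _.
  by rewrite -scalemxAl shift_gvec scalerA.
have key m : (z - lam m) * (u *m gvec m) 0 0 = 0.
  have e : z *: (u *m gvec m) = lam m *: (u *m gvec m).
    by rewrite [LHS]scalemxAl -uE -mulmxA Bg scalemxAr.
  by move/matrixP: e => /(_ 0 0); rewrite !mxE => e; rewrite mulrBl e subrr.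
have [m /eqP hm|none] := pickP (fun m : 'I_N => z == lam m); first by exists m.
exfalso; move/negP: un0; apply; apply/eqP/rowP => a; rewrite mxE.
have z0 m : (m < N)%N -> (u *m gvec m) 0 0 = 0.
  move=> mN; move: (key m) => /eqP; rewrite mulf_eq0 subr_eq0.
  by move: (none (Ordinal mN)) => /= -> /eqP.
have S0 : \sum_(m < N) (u *m gvec m) 0 0 * w ^+ (a * N.-1 * m) = 0.
  by rewrite big1 // => m _; rewrite z0 ?mul0r.
have : \sum_(m < N) (u *m gvec m) 0 0 * w ^+ (a * N.-1 * m) = u 0 a * N%:R.
  under eq_bigr do rewrite mxE mulr_suml.
  rewrite exchange_big /=.
  under eq_bigr => b _ do under eq_bigr => m _ do rewrite mxE -mulrA -exprD (mulnC m b) -mulnDl.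
  under eq_bigr do rewrite -mulr_sumr geom_sum dvd_iff.
  rewrite (bigD1 a) //= eqxx big1 ?addr0 // => b /negbTE ->; exact: mulr0.
rewrite S0 => /esym /eqP; rewrite mulf_eq0 pnatr_eq0 eqn0Ngt hN orbF => /eqP //.
Qed.
End DFT.

Lemma sum_ind (N : nat) (V : nzRingType) (a : 'I_N) :
  \sum_(r < N) ((r == a)%:R : V) = 1.
Proof. by rewrite (bigD1 a) //= eqxx big1 ?addr0 // => r /negbTE ->. Qed.

Lemma ngon_comb (R : realType) (N : nat) (hN0 : (0 < N)%N) (p : 'I_N -> 'I_N -> R)
  (hp : prob_vector p) (K : 'I_N) (m : nat) :
  in_Ngon N (\sum_(k < N) (\sum_(l < N) (p k l)%:C * omega R N ^+ (K * l))
                * omega R N ^+ (m * (N.-1 * k))).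
Proof.
pose o (k l : 'I_N) : 'I_N := Ordinal (ltn_pmod (K * l + m * (N.-1 * k)) hN0).
exists (fun r => \sum_(k < N) \sum_(l < N) p k l * (r == o k l)%:R).
case: hp => hp0 hp1.
split.
  move=> r; apply: sumr_ge0 => k _; apply: sumr_ge0 => l _.
  by apply: mulr_ge0; [exact: hp0 | exact: ler0n].
split.
  rewrite exchange_big /= -[RHS]hp1; apply: eq_bigr => k _.
  rewrite exchange_big /=; apply: eq_bigr => l _.
  by rewrite -mulr_sumr sum_ind mulr1.
symmetry.
under eq_bigr => r _ do rewrite !rmorph_sum mulr_suml.
rewrite exchange_big /=; apply: eq_bigr => k _.
rewrite mulr_suml.
under eq_bigr => r _ do rewrite rmorph_sum big_distrl /=.
rewrite exchange_big /=; apply: eq_bigr => l _.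
under eq_bigr => r _ do rewrite rmorphM rmorph_nat /= -mulrA.
rewrite -mulr_sumr sum_pick' /= omega_mod // -mulrA -exprD //.
Qed.

Theorem proposition4 (R : realType) (N : nat) (hN : (2 <= N)%N)
    (p : 'I_N -> 'I_N -> R) (hp : prob_vector p) :
  (* block diagonal in the reordered basis |j (+) k, j>, with circulant blocks *)
  (forall (k k' j j' : 'I_N),
      weyl_channel p (mxtens_index (addN j k, j)) (mxtens_index (addN j' k', j'))
      = (if k == k' then weyl_block p k j j' else 0)) /\
  (* spectrum contained in the regular N-gon *)
  (forall z : R[i], eigenvalue (weyl_channel p) z -> in_Ngon N z) /\
  (* Phi^(0) = T(Phi) = sum_k q_k X^k with q_k = sum_l p_kl *)
  weyl_block p (Ordinal (leq_trans (isT : (0 < 2)%N) hN)) = hyper_decoherence (weyl_channel p) /\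
  hyper_decoherence (weyl_channel p)
    = \sum_(k < N) (\sum_(l < N) p k l)%:C *: mxpowN (shiftX R N) k /\
  (* spectrum of Phi contains spectrum of T(Phi) *)
  (forall z : R[i], eigenvalue (hyper_decoherence (weyl_channel p)) z ->
     eigenvalue (weyl_channel p) z).
Proof.
have hN0 : (0 < N)%N := leq_trans (isT : (0 < 2)%N) hN.
set K0 := Ordinal _.
have addN0 (i : 'I_N) : addN i K0 = i by apply/val_inj => /=; rewrite addn0 modn_small.
have P3 : weyl_block p K0 = hyper_decoherence (weyl_channel p).
  apply/matrixP => i j; rewrite [RHS]mxE.
  have -> : mxtens_index (i, i) = mxtens_index (addN i K0, i) by rewrite addN0.
  have -> : mxtens_index (j, j) = mxtens_index (addN j K0, j) by rewrite addN0.
  by rewrite channel_block // eqxx.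
split; first by move=> *; apply: channel_block.
split.
  move=> z /(eig_to_block hN0) [K].
  rewrite /weyl_block => /(circ_eig hN0) [m ->].
  exact: ngon_comb.
split; first exact: P3.
split.
  rewrite -P3 /weyl_block; apply: eq_bigr => k _; congr (_ *: _).
  by rewrite rmorph_sum; apply: eq_bigr => l _; rewrite mul0n expr0 mulr1.
by move=> z; rewrite -P3; apply: block_to_eig.
Qed.
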